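(* Let $G$ be a pseudoforest and let $\tau=\tau_A$, $A=\binom{a\ b}{c\ d}$, be a nontrivial 2-switch on $G$. Suppose that either (i) $ab\in E(\operatorname{Forest}(G))$ and $cd\in E(\operatorname{Cycles}(G))$, or (ii) $ab,cd\in E(\operatorname{Cycles}(G))$. Then $\tau$ is a p-switch over $G$.
   Context: Graphs are finite, simple, undirected, labeled. A unicyclic graph is a connected graph with exactly one cycle; a pseudoforest is a graph each of whose components is a tree or a unicyclic graph. For vertices $a,b,c,d$, $A=\binom{a\ b}{c\ d}$ is interchangeable in $G$ if $ab,cd\in E(G)$, $\{a,b\}\cap\{c,d\}=\varnothing$, $ac,bd\notin E(G)$; the 2-switch $\tau_A$ sends $G$ to $G-ab-cd+ac+bd$ if $A$ is interchangeable and to $G$ otherwise (trivial). A nontrivial 2-switch $\tau$ over a pseudoforest $G$ is a p-switch if $\tau(G)$ is a pseudoforest. $\operatorname{Cycles}(H)$ is the subgraph induced by vertices lying on some cycle of $H$; $\operatorname{Forest}(H)=H-E(\operatorname{Cycles}(H))$. *)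

(* Defs.v *)
(* A finite simple labeled graph on vertex set T is a
   symmetric, irreflexive relation G : rel T. *)
From mathcomp Require Import all_boot.
From mathcomp Require Export all_boot.
Set Implicit Arguments. Unset Strict Implicit. Unset Printing Implicit Defensive.

Section Graphs.
Variable T : finType.
Implicit Types (G : rel T) (x y a b u v : T).

Definition simple_graph G := symmetric G /\ irreflexive G.

Definition same_pair x y u v : bool :=
  ((x == u) && (y == v)) || ((x == v) && (y == u)).

Definition is_cycle G (c : seq T) : bool := [&& uniq c, 3 <= size c & path.cycle G c].

(* Edge set of the cycle c (as a symmetric set of ordered pairs). *)
Definition cycle_edges (c : seq T) : {set T * T} :=
  [set p : T * T | ((p.1 \in c) && (next c p.1 == p.2))
                || ((p.2 \in c) && (next c p.2 == p.1))].

(* Pseudoforest: every connected component is a tree or unicyclic, i.e.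
   contains at most one cycle (cycles compared as subgraphs, via edge sets). *)
Definition pseudoforest G : Prop :=
  forall c1 c2 : seq T, is_cycle G c1 -> is_cycle G c2 ->
    (exists x y, [/\ x \in c1, y \in c2 & connect G x y]) ->
    cycle_edges c1 = cycle_edges c2.

Definition on_cycle G x : Prop := exists c, is_cycle G c /\ x \in c.

(* xy is an edge of Cycles(G) (induced subgraph on vertices lying on cycles) *)
Definition cycles_edge G x y : Prop := G x y /\ on_cycle G x /\ on_cycle G y.

Definition forest_edge G x y : Prop := G x y /\ ~ cycles_edge G x y.

Definition interchangeable G a b (c d : T) : bool :=
  [&& G a b, G c d, a != c, a != d, b != c, b != d, ~~ G a c & ~~ G b d].

Definition two_switch G a b (c d : T) : rel T :=
  if interchangeable G a b c d then
    fun x y => (G x y && ~~ same_pair x y a b && ~~ same_pair x y c d)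
               || same_pair x y a c || same_pair x y b d
  else G.

Definition p_switch G a b (c d : T) : Prop :=
  interchangeable G a b c d /\ pseudoforest (two_switch G a b c d).

End Graphs.

(* Main.v *)
Require Import Defs.
From Stdlib Require Import Classical.
From mathcomp Require Import all_boot.
Set Implicit Arguments. Unset Strict Implicit. Unset Printing Implicit Defensive.

Section S.
Variable T : finType.
Implicit Types (G : rel T) (f : T -> option T).

Definition gf f (x : T) := odflt x (f x).
Definition orient G f := (forall x y, f x = Some y -> G x y) /\
  (forall x y, G x y -> f x = Some y \/ f y = Some x).
Definition nc f := forall x y, f x = Some y -> f y = Some x -> False.

Lemma nextnext_neq (c : seq T) x : uniq c -> 3 <= size c -> x \in c ->
  next c (next c x) != x.
Proof.
move=> Uc Sc xc; case: (rot_to xc) => i q Hq.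
rewrite -!(next_rot i Uc) Hq.
have : uniq (x :: q) by rewrite -Hq rot_uniq.
have : 2 <= size q by rewrite -ltnS -/(size (x :: q)) -Hq size_rot.
case: q {Hq} => [|y [|z r]] //= _ /and3P[].
rewrite !inE negb_or => /andP[xy xz] yz _.
by rewrite eqxx (eq_sym y x) (negbTE xy) eqxx; move: xz; rewrite negb_or eq_sym => /andP[].
Qed.

Lemma consistent G f c : orient G f -> is_cycle G c ->
  (forall x, x \in c -> f x = Some (next c x)) \/
  (forall x, x \in c -> f x = Some (prev c x)).
Proof.
move=> [_ cov] /and3P[Uc Sc Cc].
pose P x := f x == Some (next c x).
have key : forall x, x \in c -> ~~ P x -> ~~ P (next c x).
  move=> x xc nPx; case: (cov _ _ (next_cycle Cc xc)) => H.
    by rewrite /P H eqxx in nPx.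
  rewrite /P H; apply/negP => /eqP [] /eqP; rewrite eq_sym.
  by apply/negP; apply: nextnext_neq.
have itk : forall k x, x \in c -> ~~ P x -> ~~ P (iter k (next c) x).
  elim=> [//|k IH] x xc nPx /=; apply: key; last exact: IH.
  by elim: k {IH} => //= k IHk; rewrite mem_next.
case: (boolP (all P c)) => [/allP aP|]; first by left => x /aP /eqP.
move/allPn => [x0 x0c nP0]; right => y yc.
have pyc : prev c y \in c by rewrite mem_prev.
have : fconnect (next c) x0 (prev c y).
  by rewrite (fconnect_cycle (cycle_next Uc) x0c).
move/iter_findex => Hk.
have := itk (findex (next c) x0 (prev c y)) x0 x0c nP0; rewrite Hk => nP.
case: (cov _ _ (next_cycle Cc pyc)) => H.
  by rewrite /P H eqxx in nP.
by move: H; rewrite (next_prev Uc).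
Qed.


Lemma iter_in (c : seq T) (h g : T -> T) x k :
  (forall z, z \in c -> h z \in c) -> {in c, h =1 g} -> x \in c ->
  iter k h x = iter k g x /\ iter k h x \in c.
Proof.
move=> hc hg xc; elim: k => [//|k [IH1 IH2]] /=.
by rewrite -IH1 -hg // hc.
Qed.

Lemma np_eq (c : seq T) x y : uniq c ->
  (x \in c) && (next c x == y) = (y \in c) && (prev c y == x).
Proof.
move=> Uc; apply/andP/andP => [[xc /eqP<-]|[yc /eqP<-]]; split;
  by rewrite ?mem_next ?mem_prev ?(prev_next Uc) ?(next_prev Uc).
Qed.

Definition Sf f (c : seq T) : {set T * T} :=
  [set p : T * T | ((p.1 \in c) && (f p.1 == Some p.2))
                || ((p.2 \in c) && (f p.2 == Some p.1))].

Lemma cyc_props G f c : orient G f -> is_cycle G c ->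
  [/\ forall x, x \in c -> forall y, fconnect (gf f) x y = (y \in c),
      forall x, x \in c -> gf f x \in c &
      cycle_edges c = Sf f c].
Proof.
move=> Of Cyc; have Uc : uniq c by case/and3P: Cyc.
case: (consistent Of Cyc) => H.
- have gc : forall x, x \in c -> gf f x \in c by move=> x xc; rewrite /gf H ?mem_next.
  have hg : {in c, next c =1 gf f} by move=> x xc; rewrite /gf H.
  split => //.
  + move=> x xc y; apply/idP/idP.
      move/iter_findex <-; exact: (iter_in _ gc (fun z _ => erefl) xc).2.
    move=> yc; have := fconnect_cycle (cycle_next Uc) xc y; rewrite yc.
    move/iter_findex <-; rewrite (iter_in _ (fun z => _ : z \in c -> _) hg xc).1.
      exact: fconnect_iter.
    by move=> z zc; rewrite mem_next.
  + apply/setP => p; rewrite !inE.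
    case: (boolP (p.1 \in c)) => h1; case: (boolP (p.2 \in c)) => h2 //=;
    by rewrite ?H.
- have gc : forall x, x \in c -> gf f x \in c by move=> x xc; rewrite /gf H ?mem_prev.
  have hg : {in c, prev c =1 gf f} by move=> x xc; rewrite /gf H.
  split => //.
  + move=> x xc y; apply/idP/idP.
      move/iter_findex <-; exact: (iter_in _ gc (fun z _ => erefl) xc).2.
    move=> yc; have := fconnect_cycle (cycle_next Uc) yc x; rewrite xc.
    move/iter_findex; set k := findex _ _ _ => Hk.
    have : iter k (prev c) x = y.
      rewrite -Hk; elim: (k) => [//|j IH].
      by rewrite iterSr [iter j.+1 _ _]/= (prev_next Uc).
    move=> <-; rewrite (iter_in _ (fun z => _ : z \in c -> _) hg xc).1.
      exact: fconnect_iter.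
    by move=> z zc; rewrite mem_prev.
  + apply/setP => p; rewrite !inE !np_eq // orbC.
    case: (boolP (p.1 \in c)) => h1; case: (boolP (p.2 \in c)) => h2 //=;
    by rewrite ?H.
Qed.

Lemma fconnect_step (h : T -> T) x y : fconnect h x y -> y = x \/ fconnect h (h x) y.
Proof.
move/iter_findex; case: findex => [|k] <-; first by left.
by right; rewrite iterSr; apply: fconnect_iter.
Qed.

Definition Rr f z w := fconnect (gf f) z w && fconnect (gf f) (gf f w) w.

Lemma R_edge f u v : f u = Some v -> Rr f u =1 Rr f v.
Proof.
move=> fu; have gu : gf f u = v by rewrite /gf fu.
move=> w; rewrite /Rr; apply/andP/andP => [[c1 c2] | [c1 c2]].
  case: (fconnect_step c1) => [Ew|]; last by rewrite gu.
  by subst w; rewrite -gu.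
split => //; apply: connect_trans (fconnect1 _ u) _; by rewrite gu.
Qed.

Lemma my_closed_connect G (a : T -> bool) :
  (forall x y, G x y -> a x = a y) -> forall x y, connect G x y -> a x = a y.
Proof.
move=> cl x _ /connectP[p e_p ->].
by elim: p x e_p => //= y p IHp x /andP[/cl->]; apply: IHp.
Qed.

Lemma orient_pf G f : orient G f -> pseudoforest G.
Proof.
move=> Of c1 c2 C1 C2 [x [y [xc yc conn]]].
have [r1 g1 e1] := cyc_props Of C1; have [r2 g2 e2] := cyc_props Of C2.
rewrite e1 e2; suff E : c1 =i c2 by apply/setP => p; rewrite !inE !E.
move=> w.
have cl : forall u v, G u v -> Rr f u w = Rr f v w.
  move=> u v /(Of.2) [] /R_edge H; by rewrite H.
have := my_closed_connect cl conn.
have Rc : forall c z, is_cycle G c -> z \in c -> Rr f z w = (w \in c).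
  move=> c z C zc; have [r g _] := cyc_props Of C.
  rewrite /Rr r //; case: (boolP (w \in c)) => //= wc.
  by rewrite (r _ (g _ wc)).
by rewrite (Rc _ _ C1 xc) (Rc _ _ C2 yc).
Qed.


Lemma move_sink G f s : symmetric G -> orient G f -> nc f -> f s = None ->
  forall n u, iter n (gf f) u = s -> exists f', [/\ orient G f', nc f', f' u = None &
     forall x, (forall k, k <= n -> iter k (gf f) u != x) -> f' x = f x].
Proof.
move=> sG Of ncf fs.
suff H : forall N n u, n <= N -> iter n (gf f) u = s -> exists f', [/\ orient G f', nc f', f' u = None &
     forall x, (forall k, k <= n -> iter k (gf f) u != x) -> f' x = f x].
  by move=> n u; apply: H (leqnn n).
have base : forall u, iter 0 (gf f) u = s -> exists f', [/\ orient G f', nc f', f' u = None &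
     forall x, (forall k, k <= 0 -> iter k (gf f) u != x) -> f' x = f x].
  by move=> u /= us; exists f; split; rewrite ?us.
elim=> [|N IH] n u.
  by rewrite leqn0 => /eqP->; apply: base.
case: n => [_|n]; first by apply: base.
rewrite ltnS => nN; rewrite iterSr => Hn.
case fu: (f u) => [v|]; last first.
  have gu : gf f u = u by rewrite /gf fu.
  rewrite gu in Hn; have [f' [O1 N1 U1 A1]] := IH _ u nN Hn.
  exists f'; split => // x Hx; apply: A1 => j jn; apply: Hx; exact: leqW.
have gu : gf f u = v by rewrite /gf fu.
rewrite gu in Hn.
case: (boolP [exists k : 'I_n.+1, iter k (gf f) v == u]).
  move/existsP => [k /eqP Hk].
  have Hs : iter (n - k) (gf f) u = s.
    by rewrite -Hk -iterD subnK // -ltnS.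
  have [f' [O1 N1 U1 A1]] := IH _ u (leq_trans (leq_subr _ _) nN) Hs.
  exists f'; split => // x Hx; apply: A1 => j jn; apply: Hx.
  by apply: leq_trans jn _; apply: leq_trans (leq_subr _ _) (leqnSn _).
rewrite negb_exists => /forallP Hnot.
have Hnot' : forall k, k <= n -> iter k (gf f) v != u.
  by move=> k kn; have := Hnot (Ordinal (kn : k < n.+1)).
have [f'' [O1 N1 U1 A1]] := IH _ v nN Hn.
have f''u : f'' u = Some v by rewrite A1 // => k /Hnot'; rewrite eq_sym.
have uv : u != v by have := Hnot' 0 (leq0n _); rewrite eq_sym.
pose f' := fun x => if x == u then None else if x == v then Some u else f'' x.
have aux : forall x y, f'' x = Some y -> f' x = Some y \/ f' y = Some x.
  move=> x y; rewrite /f'; case: (eqVneq x u) => [->|xu].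
    by rewrite f''u => -[<-]; right; rewrite eq_sym (negbTE uv) eqxx.
  case: (eqVneq x v) => [->|xv]; first by rewrite U1.
  by left.
exists f'; split.
- split.
  + move=> x y; rewrite /f'; case: eqP => // _; case: eqP => [-> [<-]|_ ]; last exact: O1.1.
    by rewrite sG; apply: Of.1 fu.
  + by move=> x y /(O1.2) [/aux|/aux] [] ?; [left|right|right|left].
- move=> x y; rewrite /f'; case: (eqVneq x u) => // xu.
  case: (eqVneq x v) => [-> [<-]|xv]; first by rewrite eqxx.
  case: (eqVneq y u) => // yu; case: (eqVneq y v) => [-> _ [E]|yv].
    by rewrite E eqxx in xu.
  exact: N1.
- by rewrite /f' eqxx.
- move=> x Hx; have xu : x != u by rewrite eq_sym; exact: (Hx 0 (leq0n _)).
  have xv : x != v by have := Hx 1 isT; rewrite /= gu eq_sym.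
  rewrite /f' (negbTE xu) (negbTE xv) A1 // => k kn.
  by have := Hx k.+1 kn; rewrite iterSr gu.
Qed.


Lemma iter_fix f w j : f w = None -> iter j (gf f) w = w.
Proof. by move=> fw; elim: j => //= j ->; rewrite /gf fw. Qed.

Lemma conn_iter G f x k : orient G f -> connect G x (iter k (gf f) x).
Proof.
move=> Of; elim: k => [|k IH] /=; first exact: connect0.
apply: connect_trans IH _; rewrite {2}/gf; case fw: (f _) => [y|] /=.
  by apply: connect1; apply: Of.1 fw.
exact: connect0.
Qed.

Lemma cyc_from_periodic G f z m : orient G f -> nc f -> irreflexive G ->
  f z != None -> 0 < m -> iter m (gf f) z = z -> exists c, is_cycle G c /\ z \in c.
Proof.
move=> Of ncf irr fz m0 Hm.
pose P := fun k => (0 < k) && (iter k (gf f) z == z).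
have exP : exists k, P k by exists m; rewrite /P m0 Hm eqxx.
case: (ex_minnP exP) => n /andP[npos /eqP Hn] minn.
have nn : forall k, k < n -> f (iter k (gf f) z) != None.
  move=> k kn; apply/negP => /eqP fw.
  have : iter (n - k) (gf f) (iter k (gf f) z) = z.
    by rewrite -iterD subnK // ltnW.
  by rewrite iter_fix // => E; move: fw; rewrite E => fw; rewrite fw in fz.
case: n npos Hn minn nn => // n _ Hn nmin nn.
exists (traject (gf f) z n.+1); split; last by rewrite mem_head.
have Un : uniq (traject (gf f) z n.+1) -> uniq (traject (gf f) z n.+1) by [].
have Uq : uniq (traject (gf f) z n.+1).
  rewrite looping_uniq; apply/negP => /trajectP [i ilt Hi].
  have : P i.+1 by rewrite /P /= -[X in _ == X]Hn iterS Hi -iterS eqxx.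
  by move/nmin; rewrite ltnS leqNgt ilt.
have fc : fcycle (gf f) (traject (gf f) z n.+1).
  rewrite -[traject _ _ n.+1]/(z :: traject (gf f) (gf f z) n) /cycle.
  have -> : rcons (traject (gf f) (gf f z) n) z = traject (gf f) (gf f z) n.+1.
    by rewrite trajectSr -iterSr Hn.
  exact: fpath_traject.
apply/and3P; split.
  exact: (Un Uq).
  rewrite size_traject; case: n Hn nmin nn {Un Uq fc} => [|[|n]] // Hn nmin nn.
    have E : gf f z = z := Hn.
    move: fz E; rewrite /gf; case fz': (f z) => [y|] //= _ E; subst y.
    by move: (Of.1 _ _ fz'); rewrite irr.
  have E : gf f (gf f z) = z := Hn.
  have nn1 : f (gf f z) != None := nn 1 isT.
  move: fz E nn1; rewrite /gf; case fz': (f z) => [y|] //= _.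
  case fy: (f y) => [y'|] //= E _; subst y'.
  by case: (ncf _ _ fz' fy).
apply: (cycle_from_next Uq) => x xc.
have /eqP <- := next_cycle fc xc.
case/trajectP: xc => k kn ->.
have := nn k kn; case fk: (f (iter k (gf f) z)) => [y|] // _.
have -> : gf f (iter k (gf f) z) = y by rewrite /gf fk.
exact: Of.1 fk.
Qed.

Lemma walk G f x : orient G f -> nc f -> irreflexive G ->
 (exists n, f (iter n (gf f) x) = None) \/
 (exists c z, [/\ is_cycle G c, z \in c & connect G x z]).
Proof.
move=> Of ncf irr.
have := looping_order (gf f) x; rewrite /looping => /trajectP [i iN Hi].
set z := iter i (gf f) x.
case fz: (f z) => [y|]; last by left; exists i.
right.
have Hz : iter (order (gf f) x - i) (gf f) z = z.
  rewrite /z -iterD subnK; [exact: Hi | exact: ltnW].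
have fz' : f z != None by rewrite fz.
have pos : 0 < order (gf f) x - i by rewrite subn_gt0.
have [c [Cc zc]] := cyc_from_periodic Of ncf irr fz' pos Hz.
exists c, z; split => //; exact: conn_iter.
Qed.

Lemma sp_swap (x y u v : T) : same_pair x y u v = same_pair y x u v.
Proof. by rewrite /same_pair orbC; congr orb; apply: andbC. Qed.

Lemma sp_sym (x y u v : T) : same_pair x y u v = same_pair x y v u.
Proof. by rewrite /same_pair orbC. Qed.

Lemma pf_sub G G' : pseudoforest G -> (forall x y, G' x y -> G x y) -> pseudoforest G'.
Proof.
move=> PG sub c1 c2 C1 C2 [x [y [xc yc conn]]].
have cyc : forall c, is_cycle G' c -> is_cycle G c.
  by move=> c /and3P[U S C]; apply/and3P; split => //; apply: sub_cycle C.
apply: PG (cyc _ C1) (cyc _ C2) _; exists x, y; split => //.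
by apply: connect_sub conn => a b /sub /connect1.
Qed.

Lemma exists_orient : forall n G, #|[set p : T * T | G p.1 p.2]| <= n ->
  simple_graph G -> pseudoforest G -> exists f, orient G f /\ nc f.
Proof.
elim=> [|n IH] G Hcard [sG irrG] PG.
  exists (fun _ => None); split; [split|] => // x y Gxy.
  have : (x, y) \in [set p : T * T | G p.1 p.2] by rewrite inE.
  by rewrite leqn0 in Hcard; rewrite (cards0_eq (eqP Hcard)) inE.
case: (pickP (fun p : T * T => G p.1 p.2)) => [[u0 v0] /= Huv0 | Hno]; last first.
  exists (fun _ => None); split; [split|] => // x y Gxy.
  by have := Hno (x, y); rewrite /= Gxy.
have [u [v [Guv Q]]] : exists u v, G u v /\ forall c z, is_cycle G c -> z \in c ->
    connect G u z -> (u, v) \in cycle_edges c.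
  case: (classic (exists c, is_cycle G c)) => [[c Cc]|noC]; last first.
    by exists u0, v0; split => // c z Cc; case: noC; exists c.
  have := Cc; case/and3P => _; case: c Cc => [|u q] // Cc _ _.
  exists u, (next (u :: q) u); split; first by apply: next_cycle (mem_head _ _); case/and3P: Cc.
  move=> c z Cz zc conn; rewrite -(PG _ _ Cc Cz); last by exists u, z; rewrite mem_head.
  by rewrite inE /= mem_head eqxx.
pose G' := fun x y => G x y && ~~ same_pair x y u v.
have sG' : symmetric G' by move=> x y; rewrite /G' sG sp_swap.
have irrG' : irreflexive G' by move=> x; rewrite /G' irrG.
have PG' : pseudoforest G' by apply: pf_sub PG _ => x y /andP[].
have card' : #|[set p : T * T | G' p.1 p.2]| <= n.
  rewrite -ltnS; apply: leq_trans Hcard; apply: proper_card; apply/properP; split.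
    by apply/subsetP => p; rewrite !inE => /andP[].
  by exists (u, v); rewrite !inE /=; [exact: Guv | rewrite /G' /same_pair !eqxx andbF].
have [f' [Of' ncf']] := IH G' card' (conj sG' irrG') PG'.
case: (walk u Of' ncf' irrG') => [[k fk]|[c [z [Cz zc conn]]]]; last first.
  have Gc : is_cycle G c by case/and3P: Cz => U S C; apply/and3P; split => //; apply: sub_cycle C => x y /andP[].
  have conn' : connect G u z by apply: connect_sub conn => a b /andP[] /connect1.
  have CC : cycle G' c by case/and3P: Cz.
  have := Q _ _ Gc zc conn'; rewrite inE /= => /orP[] /andP[xc /eqP nx];
    have := next_cycle CC xc; rewrite nx /G' => /andP[_];
    by rewrite /same_pair !eqxx /= ?orbT.
have [f'' [O1 N1 U1 _]] := move_sink sG' Of' ncf' fk (erefl _).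
have uv : u != v by apply: contraTneq Guv => ->; rewrite irrG.
pose f := fun x => if x == u then Some v else f'' x.
exists f; split; [split|].
- move=> x y; rewrite /f; case: eqP => [-> [<-] //|_ /O1.1 /andP[] //].
- move=> x y Gxy; case: (boolP (same_pair x y u v)).
    by case/orP => /andP[/eqP-> /eqP->]; rewrite /f eqxx; [left|right].
  move=> nsp; have : G' x y by rewrite /G' Gxy nsp.
  have aux : forall a b, f'' a = Some b -> f a = Some b.
    by move=> a b fa; rewrite /f; case: eqP => [E|//]; rewrite E U1 in fa.
  by case/(O1.2) => /aux; [left|right].
- move=> x y; rewrite /f.
  case: (eqVneq x u) => [-> [<-]|xu].
    rewrite eq_sym (negbTE uv) => /O1.1.
    by rewrite /G' /same_pair !eqxx orbT andbF.
  case: (eqVneq y u) => [-> fx [E]|yu].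
    move: fx; rewrite -E => /O1.1.
    by rewrite /G' /same_pair !eqxx orbT andbF.
  exact: N1.
Qed.


Definition rm f (a b : T) := fun x =>
  if ((x == a) && (f x == Some b)) || ((x == b) && (f x == Some a)) then None else f x.

Lemma rm_orient G f a b : orient G f ->
  orient (fun x y => G x y && ~~ same_pair x y a b) (rm f a b).
Proof.
move=> Of; split.
  move=> x y; rewrite /rm; case: ifP => // cnd fx; rewrite (Of.1 _ _ fx) /=.
  apply/negP => /orP[] /andP[/eqP ex /eqP ey]; subst x y; move: cnd;
    by rewrite fx !eqxx ?orbT.
have aux : forall x y, ~~ same_pair x y a b -> f x = Some y -> rm f a b x = Some y.
  move=> x y nsp fx; rewrite /rm fx; case: ifP => // /orP[] /andP[/eqP ex /eqP[ey]];
  by subst; move: nsp; rewrite /same_pair !eqxx ?orbT.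
move=> x y /andP[Gxy nsp]; case: (Of.2 _ _ Gxy) => fx.
  by left; apply: aux.
by right; apply: aux => //; rewrite sp_swap.
Qed.

Lemma rm_cases f a b x : rm f a b x = f x \/ rm f a b x = None.
Proof. by rewrite /rm; case: ifP; [right|left]. Qed.

Lemma rm_a f a b : f a = Some b -> rm f a b a = None.
Proof. by move=> fa; rewrite /rm fa !eqxx. Qed.

Lemma rm_b f a b : f b = Some a -> rm f a b b = None.
Proof. by move=> fb; rewrite /rm fb !eqxx orbT. Qed.

Lemma rm_none f a b x : f x = None -> rm f a b x = None.
Proof. by move=> fx; rewrite /rm fx; case: ifP. Qed.

Lemma rm_other f a b x : x != a -> x != b -> rm f a b x = f x.
Proof. by move=> xa xb; rewrite /rm (negbTE xa) (negbTE xb). Qed.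

Lemma rm_nc f a b : nc f -> nc (rm f a b).
Proof.
move=> ncf x y; rewrite /rm; case: ifP => // _ fx; case: ifP => // _ fy.
exact: ncf fx fy.
Qed.

Definition addf f (x y : T) := fun z => if z == x then Some y else f z.

Lemma add_orient G f x y : orient G f -> f x = None ->
  orient (fun z w => G z w || same_pair z w x y) (addf f x y).
Proof.
move=> Of fx; split.
  move=> z w; rewrite /addf; case: eqP => [-> [<-]|_ /Of.1 -> //].
  by rewrite /same_pair !eqxx orbT.
move=> z w /orP[/(Of.2)|].
  have aux : forall p q, f p = Some q -> addf f x y p = Some q.
    by move=> p q fp; rewrite /addf; case: eqP => // E; rewrite E fx in fp.
  by case=> /aux; [left|right].
by case/orP => /andP[/eqP-> /eqP->]; rewrite /addf eqxx; [left|right].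
Qed.

Lemma orient_eq G1 G2 f : orient G1 f -> G1 =2 G2 -> orient G2 f.
Proof.
move=> [O1 O2] E; split => x y; first by rewrite -E; apply: O1.
by rewrite -E; apply: O2.
Qed.

Lemma reach_sink f f' n x s : (forall y, f' y = f y \/ f' y = None) ->
  f' s = None -> iter n (gf f) x = s -> exists k, f' (iter k (gf f') x) = None.
Proof.
move=> H fs; elim: n x => [|n IH] x.
  by move=> /= ->; exists 0.
rewrite iterSr => Hn.
case: (H x) => fx; last by exists 0.
have [k Hk] := IH _ Hn.
exists k.+1; rewrite iterSr.
have -> : gf f' x = gf f x by rewrite /gf fx.
exact: Hk.
Qed.


Lemma core G f a b c d n : symmetric G -> irreflexive G -> orient G f -> nc f ->
  interchangeable G a b c d -> f c = Some d -> iter n (gf f) d = c ->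
  exists fH, orient (two_switch G a b c d) fH.
Proof.
move=> sG irrG Of ncf Hint fc Hn.
have := Hint; case/and4P => Gab Gcd ac /and4P[ad bc bd /andP[nGac nGbd]].
have cd : c != d by apply: contraTneq Gcd => ->; rewrite irrG.
have ab : a != b by apply: contraTneq Gab => ->; rewrite irrG.
rewrite /two_switch Hint.
pose G' := fun x y => G x y && ~~ same_pair x y a b && ~~ same_pair x y c d.
pose f2 := rm (rm f a b) c d.
have O2 : orient G' f2 by apply: rm_orient; apply: rm_orient.
have N2 : nc f2 by apply: rm_nc; apply: rm_nc.
have sG' : symmetric G' by move=> x y; rewrite /G' sG (sp_swap x y a b) (sp_swap x y c d).
have f2c : f2 c = None by apply: rm_a; rewrite rm_other // eq_sym.
have f2cases : forall y, f2 y = f y \/ f2 y = None.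
  move=> y; rewrite /f2; case: (rm_cases (rm f a b) c d y) => ->; last by right.
  exact: rm_cases.
have Etgt : forall (x1 y1 x2 y2 : T), (fun z w => (G' z w || same_pair z w x1 y1) || same_pair z w x2 y2)
   =2 (fun z w => (G z w && ~~ same_pair z w a b && ~~ same_pair z w c d) || same_pair z w a c || same_pair z w b d) ->
   forall fH, orient (fun z w => (G' z w || same_pair z w x1 y1) || same_pair z w x2 y2) fH ->
   exists fH, orient (fun z w => (G z w && ~~ same_pair z w a b && ~~ same_pair z w c d) || same_pair z w a c || same_pair z w b d) fH.
  by move=> x1 y1 x2 y2 E fH OH; exists fH; apply: orient_eq OH E.
case: (Of.2 _ _ Gab) => fab.
- have f2a : f2 a = None by apply: rm_none; apply: rm_a.
  have [k Hk] := reach_sink f2cases f2c Hn.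
  set s := iter k (gf f2) d in Hk.
  have [f3 [O3 N3 U3 A3]] := move_sink sG' O2 N2 Hk (erefl s).
  have keep : forall x, f2 x = None -> x != s -> f3 x = None.
    move=> x fx xs; rewrite A3 // => j jk; apply/eqP => E.
    move: xs; rewrite /s -(subnK jk) iterD E iter_fix // eqxx //.
  case: (eqVneq s a) => [sa|sa].
  + have f3c : f3 c = None by apply: keep; rewrite // sa eq_sym.
    have O4 := add_orient b O3 U3.
    have f4c : addf f3 d b c = None by rewrite /addf (negbTE cd).
    have O5 := add_orient a O4 f4c.
    apply: (Etgt d b c a _ _ O5).
    move=> x y /=; rewrite (sp_sym x y d b) (sp_sym x y c a).
    by case: (same_pair x y a c); case: (same_pair x y b d); rewrite ?orbT ?orbF.
  + have f3a : f3 a = None by apply: keep; rewrite // eq_sym.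
    have O4 := add_orient b O3 U3.
    have f4a : addf f3 d b a = None by rewrite /addf (negbTE ad).
    have O5 := add_orient c O4 f4a.
    apply: (Etgt d b a c _ _ O5).
    move=> x y /=; rewrite (sp_sym x y d b).
    by case: (same_pair x y a c); case: (same_pair x y b d); rewrite ?orbT ?orbF.
- have f2b : f2 b = None by apply: rm_none; apply: rm_b.
  have O4 := add_orient d O2 f2b.
  have f4c : addf f2 b d c = None by rewrite /addf eq_sym (negbTE bc).
  have O5 := add_orient a O4 f4c.
  apply: (Etgt b d c a _ _ O5).
  move=> x y /=; rewrite (sp_sym x y c a).
  by case: (same_pair x y a c); case: (same_pair x y b d); rewrite ?orbT ?orbF.
Qed.


Lemma int_swap G a b c d : symmetric G ->
  interchangeable G a b c d -> interchangeable G b a d c.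
Proof.
move=> sG /and4P[Gab Gcd ac /and4P[ad bc bd /andP[nac nbd]]].
by rewrite /interchangeable sG Gab sG Gcd bd bc ad ac nbd nac.
Qed.

Lemma ts_swap G a b c d : symmetric G -> interchangeable G a b c d ->
  two_switch G b a d c =2 two_switch G a b c d.
Proof.
move=> sG Hint; rewrite /two_switch Hint (int_swap sG Hint) => x y.
rewrite (sp_sym x y b a) (sp_sym x y d c).
by case: (same_pair x y a c); case: (same_pair x y b d); rewrite ?orbT ?orbF.
Qed.

Lemma periodic G f c x : orient G f -> is_cycle G c -> x \in c ->
  exists n, iter n (gf f) (gf f x) = x.
Proof.
move=> Of C xc; have [r g _] := cyc_props Of C.
have : fconnect (gf f) (gf f x) x by rewrite r // g.
by move/iter_findex; eexists; eauto.
Qed.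

End S.

Theorem lemma4p5 (T : finType) (G : rel T) (a b c d : T) :
  simple_graph G -> pseudoforest G ->
  interchangeable G a b c d ->
  ((forest_edge G a b /\ cycles_edge G c d) \/
   (cycles_edge G a b /\ cycles_edge G c d)) ->
  p_switch G a b c d.
Proof.
move=> [sG irrG] PG Hint Hcase.
have [Gcd [[c1 [C1 cc1]] [c2 [C2 dc2]]]] : cycles_edge G c d by case: Hcase => -[].
have [f [Of ncf]] := exists_orient (leqnn _) (conj sG irrG) PG.
split => //.
case: (Of.2 _ _ Gcd) => fcd.
- have [n Hn] := periodic Of C1 cc1.
  have gc : gf f c = d by rewrite /gf fcd.
  rewrite gc in Hn.
  have [fH OH] := core sG irrG Of ncf Hint fcd Hn.
  exact: orient_pf OH.
- have [n Hn] := periodic Of C2 dc2.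
  have gd : gf f d = c by rewrite /gf fcd.
  rewrite gd in Hn.
  have [fH OH] := core sG irrG Of ncf (int_swap sG Hint) fcd Hn.
  apply: orient_pf; apply: orient_eq OH _; exact: ts_swap.
Qed.
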